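(* Let $\beta<0$, $\kappa>0$ and $K\neq0$ be real constants and let $I=\{r>0:1-Kr>0\}$. Set $\mathcal{A}(\psi)\equiv1$, $\tilde{\mathcal{C}}(\psi)=\sqrt{-\tfrac{2\beta}{3}}\,\psi$, $\mathcal{V}\equiv0$, and $$A(r)=1-Kr,\qquad C(r)=1,\qquad \psi(r)=\sqrt{-\tfrac{6}{\beta}}\,\log(1-Kr).$$ Then $E^{(1)}_{tt}=E^{(1)}_{rr}=E^{(1)}_{\vartheta\vartheta}=E^{(1)}_{\psi}=0$ hold on $I$, i.e. this is a solution of the real-tetrad vacuum field equations with metric ${\rm d}s^2=(1-Kr)^2{\rm d}t^2-(1-Kr)^{-2}{\rm d}r^2-r^2{\rm d}\Omega^2$.
   Context: Metric ansatz ${\rm d}s^2=A(r)^2{\rm d}t^2-\frac{C(r)^2}{A(r)^2}{\rm d}r^2-r^2{\rm d}\Omega^2$, $\psi=\psi(r)$. Primes on $A,C,\psi$ are $r$-derivatives; $\mathcal{A}',\tilde{\mathcal{C}}',\tilde{\mathcal{C}}'',\mathcal{V}'$ are $\psi$-derivatives evaluated at $\psi(r)$. The real-tetrad reduced vacuum field equations of the scalar-torsion theory are: $E^{(1)}_{tt}:\ 0=\mathcal{A}\frac{A^2(-2rACA'-A^2(C-2rC')+C^3)}{r^2C^3}+\tilde{\mathcal{C}}'\Big(\frac{A^4\psi''}{C^2}-\frac{A^3\psi'(-rCA'+rAC'-2C^2)}{rC^3}\Big)-\frac{2A^3(A-C)\psi'\mathcal{A}'}{rC^2}+\frac{A^4\psi'^2\tilde{\mathcal{C}}''}{C^2}-\frac{\beta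 A^4\psi'^2}{2C^2}+\kappa^2A^2\mathcal{V}$; $E^{(1)}_{rr}:\ 0=-\frac{(2rAA'+A^2-C^2)\mathcal{A}}{r^2A^2}+\big(\frac{A'}{A}+\frac2r\big)\psi'\tilde{\mathcal{C}}'+\frac{\kappa^2C^2\mathcal{V}}{A^2}+\frac12\beta\psi'^2$; $E^{(1)}_{\vartheta\vartheta}:\ 0=-\frac{A\psi'(rA'+A-C)\mathcal{A}'}{rC^2}+\tilde{\mathcal{C}}'\Big(\frac{A\psi'(rCA'-rAC'+C^2)}{rC^3}+\frac{A^2\psi''}{C^2}\Big)+\frac{\mathcal{A}(-rCA'^2+A(rA'C'-C(rA''+2A'))+A^2C')}{rC^3}+\frac{A^2\psi'^2\tilde{\mathcal{C}}''}{C^2}-\frac{\beta A^2\psi'^2}{2C^2}+\kappa^2\mathcal{V}$; $E^{(1)}_{\psi}:\ 0=\frac{(A-C)(2rA'+A-C)\mathcal{A}'}{r^2C^2}+\frac{\beta A\psi'(2rCA'+A(2C-rC'))}{rC^3}+\frac{\beta A^2\psi''}{C^2}+\kappa^2\mathcal{V}'+\frac{\tilde{\mathcal{C}}'(rCA'(rA'-2C)+A(-r^2A'C'+rC(rA''+6A')-2C^2)+2A^2(C-rC'))}{r^2C^3}$. *)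

(* Defs.v *)
From Stdlib Require Import Reals.
From Coquelicot Require Import Coquelicot.
Open Scope R_scope.

(* The reduced real-tetrad vacuum field equations of the scalar-torsion
   theory, for the ansatz ds^2 = A^2 dt^2 - C^2/A^2 dr^2 - r^2 dOmega^2,
   psi = psi(r).  [cA], [cC], [cV] are the coupling functions
   \mathcal{A}, \tilde{\mathcal{C}}, \mathcal{V} of psi; primes on them
   are psi-derivatives evaluated at psi(r); primes on A, C, psi are
   r-derivatives. *)

Section FieldEqs.
Variables (beta kappa : R) (cA cC cV A C psi : R -> R) (r : R).

Let a := A r.
Let a1 := Derive A r.
Let a2 := Derive (Derive A) r.
Let c := C r.
Let c1 := Derive C r.
Let p1 := Derive psi r.
Let p2 := Derive (Derive psi) r.
Let fA := cA (psi r).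
Let fA1 := Derive cA (psi r).
Let fC1 := Derive cC (psi r).
Let fC2 := Derive (Derive cC) (psi r).
Let fV := cV (psi r).
Let fV1 := Derive cV (psi r).

Definition E_tt : R :=
  fA * (a^2 * (-2 * r * a * c * a1 - a^2 * (c - 2 * r * c1) + c^3)) / (r^2 * c^3)
  + fC1 * (a^4 * p2 / c^2
           - a^3 * p1 * (- r * c * a1 + r * a * c1 - 2 * c^2) / (r * c^3))
  - 2 * a^3 * (a - c) * p1 * fA1 / (r * c^2)
  + a^4 * p1^2 * fC2 / c^2
  - beta * a^4 * p1^2 / (2 * c^2)
  + kappa^2 * a^2 * fV.

Definition E_rr : R :=
  - (2 * r * a * a1 + a^2 - c^2) * fA / (r^2 * a^2)
  + (a1 / a + 2 / r) * p1 * fC1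
  + kappa^2 * c^2 * fV / a^2
  + / 2 * beta * p1^2.

Definition E_thth : R :=
  - a * p1 * (r * a1 + a - c) * fA1 / (r * c^2)
  + fC1 * (a * p1 * (r * c * a1 - r * a * c1 + c^2) / (r * c^3)
           + a^2 * p2 / c^2)
  + fA * (- r * c * a1^2 + a * (r * a1 * c1 - c * (r * a2 + 2 * a1)) + a^2 * c1)
      / (r * c^3)
  + a^2 * p1^2 * fC2 / c^2
  - beta * a^2 * p1^2 / (2 * c^2)
  + kappa^2 * fV.

Definition E_psi : R :=
  (a - c) * (2 * r * a1 + a - c) * fA1 / (r^2 * c^2)
  + beta * a * p1 * (2 * r * c * a1 + a * (2 * c - r * c1)) / (r * c^3)
  + beta * a^2 * p2 / c^2
  + kappa^2 * fV1
  + fC1 * (r * c * a1 * (r * a1 - 2 * c)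
           + a * (- r^2 * a1 * c1 + r * c * (r * a2 + 6 * a1) - 2 * c^2)
           + 2 * a^2 * (c - r * c1)) / (r^2 * c^3).

End FieldEqs.

(* Main.v *)
Require Import Defs.
From Stdlib Require Import Reals Lra.
From Coquelicot Require Import Coquelicot.
Open Scope R_scope.

Lemma DA (K t : R) : Derive (fun r => 1 - K * r) t = - K.
Proof. apply is_derive_unique. auto_derive; auto; ring. Qed.

Lemma DDA (K t : R) : Derive (Derive (fun r => 1 - K * r)) t = 0.
Proof. rewrite (Derive_ext _ (fun _ => - K)); [apply Derive_const| intros; apply DA]. Qed.

Lemma DL (s K t : R) : 0 < 1 - K * t ->
  Derive (fun r => s * ln (1 - K * r)) t = - s * K / (1 - K * t).
Proof. intros H. apply is_derive_unique. auto_derive; [lra|field; lra]. Qed.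

Lemma loc (K r : R) : 0 < 1 - K * r -> locally r (fun y => 0 < 1 - K * y).
Proof.
  intros H.
  assert (He : 0 < (1 - K * r) / (Rabs K + 1)).
  { apply Rdiv_lt_0_compat; [lra| pose proof (Rabs_pos K); lra]. }
  exists (mkposreal _ He). intros y Hy. simpl in Hy.
  unfold ball in Hy; simpl in Hy; unfold AbsRing_ball, abs, minus, plus, opp in Hy; simpl in Hy.
  pose proof (Rabs_pos K).
  assert (Rabs (K * (y - r)) < 1 - K * r).
  { rewrite Rabs_mult. apply Rle_lt_trans with (Rabs K * ((1 - K*r)/(Rabs K + 1))).
    apply Rmult_le_compat_l; [lra|]. left; replace (y - r) with (y + - r) by ring; exact Hy.
    apply Rlt_le_trans with ((Rabs K + 1) * ((1 - K*r)/(Rabs K + 1))); [apply Rmult_lt_compat_r; lra|].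
    right; field; lra. }
  pose proof (Rle_abs (K * (y - r))).
  replace (1 - K * y) with ((1 - K*r) + - (K * (y - r))) by ring. lra.
Qed.

Lemma DDL (s K t : R) : 0 < 1 - K * t ->
  Derive (Derive (fun r => s * ln (1 - K * r))) t = - s * K ^ 2 / (1 - K * t) ^ 2.
Proof.
  intros H. rewrite (Derive_ext_loc _ (fun r => - s * K / (1 - K * r))).
  - apply is_derive_unique. auto_derive; [lra| field; lra].
  - generalize (loc K t H). apply filter_imp. intros y Hy. apply DL; auto.
Qed.

Lemma DC (q x : R) : Derive (fun p => q * p) x = q.
Proof. apply is_derive_unique. auto_derive; auto; ring. Qed.

Lemma DDC (q x : R) : Derive (Derive (fun p => q * p)) x = 0.
Proof. rewrite (Derive_ext _ (fun _ => q)); [apply Derive_const| intros; apply DC]. Qed.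

Theorem mainTheorem3 (beta kappa K : R) :
  beta < 0 -> kappa > 0 -> K <> 0 ->
  let cA := fun _ : R => 1 in
  let cC := fun p : R => sqrt (- (2 * beta / 3)) * p in
  let cV := fun _ : R => 0 in
  let A := fun r : R => 1 - K * r in
  let C := fun _ : R => 1 in
  let psi := fun r : R => sqrt (- (6 / beta)) * ln (1 - K * r) in
  forall r : R, 0 < r -> 0 < 1 - K * r ->
    E_tt beta kappa cA cC cV A C psi r = 0 /\
    E_rr beta kappa cA cC cV A C psi r = 0 /\
    E_thth beta kappa cA cC cV A C psi r = 0 /\
    E_psi beta kappa cA cC cV A C psi r = 0.
Proof.
  intros Hb Hk HK cA cC cV A C psi r Hr Ha.
  assert (Hi : 0 < / (- beta)) by (apply Rinv_0_lt_compat; lra).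
  assert (P1 : 0 < - (6 / beta)) by (replace (- (6 / beta)) with (6 * / (- beta)) by (field; lra); nra).
  assert (P2 : 0 < - (2 * beta / 3)) by lra.
  assert (Hs2 := sqrt_sqrt _ (Rlt_le _ _ P1)).
  assert (Hq2 := sqrt_sqrt _ (Rlt_le _ _ P2)).
  assert (Hsp := sqrt_lt_R0 _ P1).
  assert (Hqp := sqrt_lt_R0 _ P2).
  set (s := sqrt (- (6 / beta))) in *.
  set (q := sqrt (- (2 * beta / 3))) in *.
  assert (Hb' : beta = - 6 / (s * s)) by (rewrite Hs2; field; lra).
  assert (H4 : q * s * (q * s) = 4).
  { replace (q * s * (q * s)) with ((q * q) * (s * s)) by ring.
    rewrite Hq2, Hs2. field; lra. }
  assert (Hqs : q * s = 2).
  { assert (0 < q * s) by (apply Rmult_lt_0_compat; lra). nra. }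
  assert (Hq : q = 2 / s) by (rewrite <- Hqs; field; lra).
  clear Hqs H4.
  subst cA cC cV A C psi.
  rewrite Hq.
  unfold E_tt, E_rr, E_thth, E_psi.
  rewrite !Derive_const, !DA, !DDA, !DL, !DDL, !DC, !DDC by exact Ha.
  rewrite Hb'.
  assert (0 < 1 - K * r) by exact Ha.
  repeat split; field; repeat split; lra.
Qed.
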